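(* Let $[\gamma]\in J$ with $2\le l(M_\gamma)<p$ and $e([\gamma])=0$. Then there exists $[\gamma']\in J$ such that: (1) $l(M_{\gamma'})=l(M_\gamma)+1$; (2) $[\gamma']^{\rho^2}=[\gamma]^{\rho}$; (3) the $G$-fixed submodules coincide: $M_\gamma^G=M_{\gamma'}^G$; (4) if $l(M_\gamma)<p-1$, then $[\gamma']\in J_{p-1}$ and $e([\gamma'])=0$.
   Context: $p$ odd prime; $F$ a field containing a primitive $p$th root of unity $\xi_p$; $K=F(\sqrt[p]{a})$, $a\in F^\times$, cyclic of degree $p$; $G=\mathrm{Gal}(K/F)=\langle\sigma\rangle$ with $\sigma(\sqrt[p]{a})=\xi_p\sqrt[p]{a}$; $\rho=\sigma-1$. $J=K^\times/K^{\times p}$ as a multiplicative $\mathbb{F}_p[G]$-module with exponential action, $[\gamma]$ the class of $\gamma$; $J_i=\ker(\rho^i)$. $M_\gamma$ is the $\mathbb{F}_p[G]$-submodule generated by $[\gamma]$; its length $l(M_\gamma)$ is its $\mathbb{F}_p$-dimension, equivalently the least $i$ with $[\gamma]^{\rho^i}$ trivial. For $[\gamma]\in J_{p-1}$, the index $e([\gamma])\in\mathbb{F}_p$ is defined by $\xi_p^{e([\gamma])}=\sigma(\delta)/\delta$ where $\delta\in K$ is any $p$th root of $N_{K/F}(\gamma)$. *)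

(* Defs.v *)
From HB Require Import structures.
From mathcomp Require Import all_boot all_order all_algebra all_field.
Set Implicit Arguments. Unset Strict Implicit. Unset Printing Implicit Defensive.
Import GRing.Theory.
Local Open Scope ring_scope.

(* Setting: K : fieldExtType F, sigma : K -> K the generator of Gal(K/F).
   Elements of J = K^x / K^{x p} are represented by nonzero gamma : K;
   [gamma] is its class. *)

Section Defs.
Variables (F : fieldType) (K : fieldExtType F).

Definition pth_power (p : nat) (x : K) : Prop := exists y : K, x = y ^+ p.

Definition cls_eq (p : nat) (x y : K) : Prop := exists z : K, x = y * z ^+ p.

(* representative of [x]^rho, rho = sigma - 1 (exponential action) *)
Definition rho (s : K -> K) (x : K) : K := s x / x.

Definition rhoi (s : K -> K) (i : nat) (x : K) : K := iter i (rho s) x.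

Definition length_is (p : nat) (s : K -> K) (g : K) (n : nat) : Prop :=
  pth_power p (rhoi s n g) /\ (forall i, (i < n)%N -> ~ pth_power p (rhoi s i g)).

Definition in_Ji (p : nat) (s : K -> K) (i : nat) (x : K) : Prop :=
  pth_power p (rhoi s i x).

Definition normK (p : nat) (s : K -> K) (x : K) : K :=
  \prod_(i < p) iter i s x.

Definition e_index_is (p : nat) (s : K -> K) (xi : F) (x : K) (k : nat) : Prop :=
  exists delta : K, delta ^+ p = normK p s x /\ delta != 0 /\
                    s delta = (xi ^+ k)%:A * delta.

(* [x] lies in M_g, the F_p[G]-submodule generated by [g]:
   [x] = [prod_{i<p} sigma^i(g)^{c_i}] for some c_i *)
Definition in_M (p : nat) (s : K -> K) (g x : K) : Prop :=
  exists c : 'I_p -> nat, cls_eq p x (\prod_(i < p) (iter i s g) ^+ (c i)).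

Definition G_fixed (p : nat) (s : K -> K) (x : K) : Prop := cls_eq p (s x) x.

End Defs.

(* Main.v *)
Require Import Defs.
From HB Require Import structures.
From mathcomp Require Import all_boot all_order all_algebra all_field.
From mathcomp Require Import zify.
Import GRing.Theory.

Set Implicit Arguments.
Local Open Scope ring_scope.

Section Basics.
Variables (F : fieldType) (K : fieldExtType F) (sigma : 'AEnd(K)).

Lemma sM (x y : K) : sigma (x * y) = sigma x * sigma y.
Proof. exact: rmorphM. Qed.
Lemma s1 : sigma 1 = 1 :> K.
Proof. exact: rmorph1. Qed.
Lemma sV (x : K) : sigma (x^-1) = (sigma x)^-1.
Proof. exact: fmorphV. Qed.
Lemma sX (x : K) n : sigma (x ^+ n) = (sigma x) ^+ n.
Proof. exact: rmorphXn. Qed.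
Lemma sA (c : F) : sigma (c%:A) = c%:A.
Proof. by rewrite linearZ /= rmorph1. Qed.
Lemma s_eq0 (x : K) : (sigma x == 0) = (x == 0).
Proof. exact: fmorph_eq0. Qed.
Lemma sXz (x : K) (z : int) : sigma (x ^ z) = (sigma x) ^ z.
Proof.
case: z => n; first exact: sX.
by rewrite !NegzE -!exprnN sV sX.
Qed.

Lemma iM i (x y : K) : iter i sigma (x * y) = iter i sigma x * iter i sigma y.
Proof. by elim: i => //= i ->; rewrite sM. Qed.
Lemma i1 i : iter i sigma 1 = 1 :> K.
Proof. by elim: i => //= i ->; rewrite s1. Qed.
Lemma iV i (x : K) : iter i sigma (x^-1) = (iter i sigma x)^-1.
Proof. by elim: i => //= i ->; rewrite sV. Qed.
Lemma iX i (x : K) n : iter i sigma (x ^+ n) = (iter i sigma x) ^+ n.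
Proof. by elim: i => //= i ->; rewrite sX. Qed.
Lemma iXz i (x : K) z : iter i sigma (x ^ z) = (iter i sigma x) ^ z.
Proof. by elim: i => //= i ->; rewrite sXz. Qed.
Lemma i_eq0 i (x : K) : (iter i sigma x == 0) = (x == 0).
Proof. by elim: i => //= i <-; rewrite s_eq0. Qed.
Lemma iA i (c : F) : iter i sigma (c%:A) = c%:A.
Proof. by elim: i => //= i ->; rewrite sA. Qed.
Lemma iS i (x : K) : iter i sigma (sigma x) = iter i.+1 sigma x.
Proof. by rewrite iterSr. Qed.

End Basics.

Section ActSec.
Variables (F : fieldType) (K : fieldExtType F) (sigma : 'AEnd(K)).

Definition ActN (m : nat) (q : {poly int}) (x : K) :=
  \prod_(i < m) (iter i sigma x) ^ q`_i.
Definition Act (q : {poly int}) (x : K) := ActN (size q) q x.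

Lemma ActNE m (q : {poly int}) (x : K) : (size q <= m)%N -> ActN m q x = Act q x.
Proof.
move=> H; rewrite /Act /ActN -(subnKC H) big_split_ord /=.
rewrite [X in _ * X]big1 ?mulr1 // => i _.
by rewrite nth_default ?expr0z // leq_addr.
Qed.

Lemma prodXz m (f : 'I_m -> K) (c : int) :
  (\prod_(i < m) f i) ^ c = \prod_(i < m) (f i) ^ c.
Proof.
elim: m f => [|m IH] f; first by rewrite !big_ord0 exp1rz.
by rewrite !big_ord_recr /= expfzMl IH.
Qed.

Lemma Act0 (x : K) : Act 0 x = 1.
Proof. by rewrite /Act /ActN size_poly0 big_ord0. Qed.

Lemma Act_neq0 (q : {poly int}) {x : K} : x != 0 -> Act q x != 0.
Proof.
move=> x0; apply/prodf_neq0 => i _; apply: expfz_neq0.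
by rewrite i_eq0.
Qed.

Lemma ActD (q1 q2 : {poly int}) (x : K) : x != 0 -> Act (q1 + q2) x = Act q1 x * Act q2 x.
Proof.
move=> x0; set m := maxn (size q1) (size q2).
rewrite -!(ActNE m) ?leq_maxl ?leq_maxr ?size_polyD // /ActN -big_split /=.
by apply: eq_bigr => i _; rewrite coefD expfzDr // i_eq0.
Qed.

Lemma ActZ (q : {poly int}) (c : int) (x : K) : Act (q * c%:P) x = (Act q x) ^ c.
Proof.
have Hs : (size (q * c%:P)%R <= size q)%N.
  apply: leq_trans (size_mul_leq _ _) _; rewrite size_polyC.
  by case: (c != 0); rewrite ?addn1 ?addn0 //= leq_pred.
rewrite -(ActNE (size q)) // /Act /ActN prodXz.
by apply: eq_bigr => i _; rewrite coefMC exprz_exp.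
Qed.

Lemma ActC (c : int) (x : K) : Act (c%:P) x = x ^ c.
Proof.
rewrite -(ActNE 1) ?size_polyC ?leq_b1 // /ActN big_ord1 /=.
by rewrite coefC.
Qed.

Lemma Act1 (x : K) : Act 1 x = x.
Proof. by rewrite ActC expr1z. Qed.

Lemma ActX (q : {poly int}) (x : K) : Act ('X * q) x = sigma (Act q x).
Proof.
have Hs : (size ('X * q)%R <= (size q).+1)%N.
  apply: leq_trans (size_mul_leq _ _) _; rewrite size_polyX.
  by [].
rewrite -(ActNE (size q).+1) // /Act /ActN big_ord_recl /= coefXM /= expr0z mul1r.
rewrite rmorph_prod; apply: eq_bigr => i _.
by rewrite coefXM /= sXz.
Qed.

Lemma ActM (r q : {poly int}) (x : K) : x != 0 -> Act (r * q) x = Act r (Act q x).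
Proof.
move=> x0; have y0 := Act_neq0 q x0.
elim/poly_ind: r => [|r c IH]; first by rewrite mul0r !Act0.
have -> : (r * 'X + c%:P) * q = 'X * (r * q) + q * c%:P.
  by rewrite mulrDl [c%:P * q]mulrC [r * 'X]mulrC mulrA.
rewrite ActD // ActX ActZ IH.
by rewrite [r * 'X]mulrC ActD // ActX ActC.
Qed.

Lemma Arho (y : K) : y != 0 -> rho sigma y = Act ('X - 1) y.
Proof.
move=> y0; have -> : ('X - 1 : {poly int}) = 'X * 1 + 1 * (-1)%:P.
  by rewrite mulr1 mul1r polyCN polyC1.
rewrite /rho.
by rewrite ActD // ActX ActZ Act1 exprN1.
Qed.

Lemma Arhoi k (y : K) : y != 0 -> rhoi sigma k y = Act (('X - 1) ^+ k) y.
Proof.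
move=> y0; elim: k => [|k IH]; first by rewrite expr0 Act1.
rewrite /rhoi iterS -/(rhoi sigma k y) IH exprS ActM // Arho //.
exact: Act_neq0.
Qed.

End ActSec.



Section Cls.
Variables (F : fieldType) (K : fieldExtType F) (sigma : 'AEnd(K)) (p : nat).
Hypothesis p_gt0 : (0 < p)%N.

Lemma Xz_pos (x : K) n : x ^ (Posz n) = x ^+ n.
Proof. by []. Qed.

Lemma cls_refl (x : K) : cls_eq p x x.
Proof. by exists 1; rewrite expr1n mulr1. Qed.

Lemma cls_trans (x y w : K) : cls_eq p x y -> cls_eq p y w -> cls_eq p x w.
Proof.
by case=> z -> [t ->]; exists (t * z); rewrite exprMn mulrA.
Qed.

Lemma cls_sym {x y : K} : x != 0 -> cls_eq p x y -> cls_eq p y x.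
Proof.
move=> x0 [z Ez]; have z0 : z != 0.
  by apply: contraNneq x0 => z0; rewrite Ez z0 expr0n gtn_eqF // mulr0.
by exists z^-1; rewrite Ez exprVn -mulrA mulfV ?mulr1 // expf_neq0.
Qed.

Lemma cls_mul (x y x' y' : K) :
  cls_eq p x y -> cls_eq p x' y' -> cls_eq p (x * x') (y * y').
Proof.
case=> z -> [t ->]; exists (z * t); rewrite exprMn.
by rewrite -!mulrA; congr (_ * _); rewrite mulrCA.
Qed.

Lemma cls_pth (x y : K) : x != 0 -> cls_eq p x y -> pth_power p x -> pth_power p y.
Proof.
move=> x0 /(cls_sym x0) [z ->] [t ->]; exists (t * z); by rewrite exprMn.
Qed.

Lemma pth_cls (x : K) (t : K) : pth_power p t -> cls_eq p (t * x) x.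
Proof. by case=> z ->; exists z; rewrite mulrC. Qed.

Lemma pth_div (x y : K) : x != 0 -> pth_power p x -> pth_power p (x * y) ->
  pth_power p y.
Proof.
move=> x0 [t Et] [u Eu]; exists (u / t).
by rewrite expr_div_n -Et -Eu mulrC mulKf.
Qed.

Lemma rhoM (x y : K) : rho sigma (x * y) = rho sigma x * rho sigma y.
Proof. by rewrite /rho sM invfM mulrACA. Qed.

Lemma rhoX (x : K) n : rho sigma (x ^+ n) = (rho sigma x) ^+ n.
Proof. by rewrite /rho sX expr_div_n. Qed.

Lemma rho_neq0 (x : K) : x != 0 -> rho sigma x != 0.
Proof. by move=> x0; rewrite /rho mulf_neq0 ?invr_eq0 ?s_eq0. Qed.

Lemma rhoi_neq0 k (x : K) : x != 0 -> rhoi sigma k x != 0.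
Proof. by move=> x0; elim: k => //= k IH; apply: rho_neq0. Qed.

Lemma rhoiS k (x : K) : rhoi sigma k.+1 x = rhoi sigma k (rho sigma x).
Proof. by rewrite /rhoi iterSr. Qed.

Lemma rhoiM k (x y : K) : rhoi sigma k (x * y) = rhoi sigma k x * rhoi sigma k y.
Proof. by elim: k => //= k IH; rewrite IH rhoM. Qed.

Lemma rhoi_fixed k (v : K) : v != 0 -> sigma v = v -> rhoi sigma k.+1 v = 1.
Proof.
move=> v0 sv; rewrite rhoiS /rho sv mulfV //.
by elim: k => //= k ->; rewrite /rho s1 invr1 mulr1.
Qed.

Lemma pth_rho (x : K) : pth_power p x -> pth_power p (rho sigma x).
Proof. by case=> t ->; exists (rho sigma t); rewrite rhoX. Qed.

Lemma pth_rhoi k (x : K) : pth_power p x -> pth_power p (rhoi sigma k x).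
Proof. by elim: k => //= k IH /IH; apply: pth_rho. Qed.

Lemma pth_rhoi_le k m (x : K) : (k <= m)%N -> pth_power p (rhoi sigma k x) ->
  pth_power p (rhoi sigma m x).
Proof.
move=> km H; rewrite -(subnK km) /rhoi iterD.
exact: (@pth_rhoi (m - k) _ H).
Qed.

Lemma cls_rho (x y : K) : cls_eq p x y -> cls_eq p (rho sigma x) (rho sigma y).
Proof. by case=> z ->; exists (rho sigma z); rewrite rhoM rhoX. Qed.

Lemma cls_rhoi k (x y : K) : cls_eq p x y -> cls_eq p (rhoi sigma k x) (rhoi sigma k y).
Proof. by elim: k => //= k IH /IH; apply: cls_rho. Qed.

Lemma ActMul (q : {poly int}) (x y : K) :
  Act sigma q (x * y) = Act sigma q x * Act sigma q y.
Proof.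
by rewrite /Act /ActN -big_split; apply: eq_bigr => i _; rewrite iM expfzMl.
Qed.

Lemma ActP (q : {poly int}) (x : K) :
  Act sigma q (x ^+ p) = (Act sigma q x) ^+ p.
Proof.
rewrite /Act /ActN -[RHS]Xz_pos prodXz; apply: eq_bigr => i _.
by rewrite iX -Xz_pos exprzAC.
Qed.

Lemma cls_Act (q : {poly int}) (x y : K) :
  cls_eq p x y -> cls_eq p (Act sigma q x) (Act sigma q y).
Proof. by case=> z ->; exists (Act sigma q z); rewrite ActMul ActP. Qed.

Lemma pth_Act (q : {poly int}) (x : K) :
  pth_power p x -> pth_power p (Act sigma q x).
Proof. by case=> t ->; exists (Act sigma q t); rewrite ActP. Qed.

Lemma pthXz (x : K) (c : int) : pth_power p x -> pth_power p (x ^ c).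
Proof. by case=> t ->; exists (t ^ c); rewrite -!Xz_pos exprzAC. Qed.

Lemma split_mod (y : K) (c : int) : y != 0 -> cls_eq p (y ^ c) (y ^+ `|(c %% p)%Z|%N).
Proof.
move=> y0; have pn0 : (p%:Z != 0) by rewrite eqz_nat -lt0n.
have E : ((`|(c %% p)%Z|%N : int) = (c %% p)%Z) by rewrite gez0_abs // modz_ge0.
rewrite {1}(divz_eq c p) expfzDr // -exprz_exp -Xz_pos E mulrC.
by exists (y ^ (c %/ p)%Z).
Qed.

Hypothesis p_prime : prime p.

Lemma pth_coprime (y : K) (c : int) : y != 0 -> ~~ (p %| `|c|)%N ->
  pth_power p (y ^ c) -> pth_power p y.
Proof.
move=> y0 ndv [t Et].
have cop : coprimez c p.
  by rewrite coprimezE /= coprime_sym prime_coprime.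
have [u [v Euv]] := Bezoutz c p.
move: cop; rewrite /coprimez => /eqP cop; rewrite cop in Euv.
exists (t ^ u * y ^ v).
rewrite -Xz_pos in Et.
rewrite exprMn -!Xz_pos exprzAC -Et !exprz_exp -expfzDr //.
rewrite -[y in LHS]expr1z -Euv; congr (_ ^ (_ + _)); apply: mulrC.
Qed.

End Cls.

Section Core.
Variables (F : fieldType) (K : fieldExtType F) (sigma : 'AEnd(K)) (p : nat).
Hypothesis p_prime : prime p.
Variables (g : K) (n : nat).
Hypotheses (g0 : g != 0) (len : length_is p sigma g n) (n1 : (1 <= n)%N).

Let p_gt0 : (0 < p)%N := prime_gt0 p_prime.
Local Notation T q := (Act sigma q g).
Local Notation Y := ('X - 1 : {poly int}).

Lemma T_neq0 q : T q != 0.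
Proof. exact: Act_neq0. Qed.

Lemma rhoi_T d q : rhoi sigma d (T q) = T (Y ^+ d * q).
Proof. by rewrite ActM // -Arhoi // T_neq0. Qed.

Lemma Tn r : pth_power p (T (Y ^+ n * r)).
Proof.
rewrite mulrC ActM // -Arhoi //; apply: pth_Act; exact: len.1.
Qed.

Lemma h_npth : ~ pth_power p (T (Y ^+ n.-1)).
Proof.
rewrite -Arhoi //; apply: len.2; by rewrite prednK.
Qed.

Lemma decomp (q : {poly int}) : exists q1, q = q1 * Y + (q.[1])%:P.
Proof.
have : root (q - (q.[1])%:P) 1 by rewrite /root hornerD hornerN hornerC subrr.
case/factor_theorem => q1 Eq; exists q1.
by rewrite -polyC1 -Eq subrK.
Qed.

Lemma Texp k q1 c : T (Y ^+ k * (q1 * Y + c%:P)) = T (Y ^+ k.+1 * q1) * T (Y ^+ k) ^ c.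
Proof.
rewrite mulrDr ActD // ActZ; congr (_ * _).
by rewrite mulrA exprSr -!mulrA [Y * q1]mulrC.
Qed.

Lemma ZL d : (d <= n)%N -> forall q, pth_power p (T (Y ^+ (n - d) * q)) ->
  exists r, cls_eq p (T q) (T (Y ^+ d * r)).
Proof.
elim: d => [|d IH] dn q H.
  by exists q; rewrite expr0 mul1r; apply: cls_refl.
have [q1 Eq] := decomp q; set c := q.[1] in Eq.
have ne : (n - d = (n - d.+1).+1)%N by rewrite subnSK.
have H1 := pth_rhoi sigma d H; rewrite rhoi_T mulrA -exprD in H1.
have E1 : (d + (n - d.+1) = n.-1)%N.
  by lia.
rewrite E1 Eq Texp prednK // in H1.
have Hc := pth_div _ (T_neq0 _) (Tn q1) H1.
have dvd : (p %| `|c|)%N.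
  apply/negPn/negP => ndv; apply: h_npth.
  exact: (pth_coprime p_prime _ _ (T_neq0 _) ndv Hc).
have Ec : c = ((c %/ p)%Z * p)%R by rewrite divzK.
have Ppow : forall k, pth_power p (T (Y ^+ k) ^ c).
  by move=> k; rewrite Ec -exprz_exp; exists (T (Y ^+ k) ^ (c %/ p)%Z).
rewrite Eq Texp -ne in H.
have H2 : pth_power p (T (Y ^+ (n - d) * q1)).
  by rewrite mulrC in H; apply: (pth_div _ _ (Ppow _) H); rewrite expfz_neq0 // T_neq0.
have [r Hr] := IH (ltnW dn) q1 H2.
exists r.
have Eq2 : T q = T (Y ^+ 1 * q1) * T (Y ^+ 0) ^ c.
  by rewrite -Texp expr0 mul1r -Eq.
have -> : T (Y ^+ d.+1 * r) = rhoi sigma 1 (T (Y ^+ d * r)).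
  by rewrite rhoi_T mulrA -exprD.
rewrite Eq2; apply: (@cls_trans _ _ _ _ (T (Y ^+ 1 * q1))).
  by rewrite mulrC; exact: (pth_cls _ (Ppow 0%N)).
rewrite -rhoi_T; exact: cls_rhoi.
Qed.

Lemma fromM (c : 'I_p -> nat) : exists q, T q = \prod_(i < p) (iter i sigma g) ^+ c i.
Proof.
exists (\poly_(i < p) (odflt 0 (omap (fun j : 'I_p => (c j)%:Z) (insub i)))).
rewrite -(ActNE sigma _ _ _ (size_poly _ _)) /ActN; apply: eq_bigr => i _.
by rewrite coef_poly ltn_ord valK.
Qed.

Lemma toM (q : {poly int}) : (size q <= p)%N ->
  exists e : 'I_p -> nat, cls_eq p (T q) (\prod_(i < p) (iter i sigma g) ^+ e i).
Proof.
move=> sq; exists (fun i : 'I_p => `|(q`_i %% p)%Z|%N).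
rewrite -(ActNE sigma _ _ _ sq) /ActN.
apply: (big_ind2 (cls_eq p)); [exact: cls_refl | move=> *; exact: cls_mul |].
move=> i _; apply: split_mod; [exact: p_gt0 | by rewrite i_eq0].
Qed.

Local Notation h := (T (Y ^+ n.-1)).

Lemma core_fix x : x != 0 -> in_M p sigma g x -> G_fixed p sigma x ->
  exists k : nat, cls_eq p x (h ^+ k).
Proof.
move=> x0 [c Hc] [w Hw].
have [q Eq] := fromM c; rewrite -Eq in Hc.
have rx : rho sigma x = w ^+ p by rewrite /rho Hw mulrAC mulfV ?mul1r.
have Hr : pth_power p (T (Y ^+ (n - n.-1) * q)).
  have -> : (n - n.-1 = 1)%N by lia.
  rewrite -rhoi_T.
  have Hx1 : rhoi sigma 1 x != 0 := rho_neq0 sigma x x0.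
  apply: (cls_pth p_gt0 Hx1 (cls_rhoi sigma 1 Hc)); by exists w.
have [r Hr2] := ZL _ (leq_pred n) _ Hr.
have [r1 Er] := decomp r; rewrite Er Texp prednK // in Hr2.
exists `|(r.[1] %% p)%Z|%N.
apply: cls_trans Hc _; apply: cls_trans Hr2 _.
apply: cls_trans (pth_cls _ (Tn _)) _.
exact: split_mod (T_neq0 _).
Qed.

Lemma h_fixed k : G_fixed p sigma (h ^+ k).
Proof.
have [t Et] : pth_power p (rho sigma h).
  have -> : rho sigma h = T (Y ^+ n * 1).
    by rewrite -[rho _ _]/(rhoi sigma 1 _) rhoi_T mulr1 -exprD add1n prednK.
  exact: Tn.
exists (t ^+ k); rewrite sX -exprM mulnC exprM -Et -exprMn.
by congr (_ ^+ _); rewrite /rho mulrCA mulfV ?mulr1 // T_neq0.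
Qed.

Lemma inM_cls x y : cls_eq p x y -> in_M p sigma g y -> in_M p sigma g x.
Proof. by move=> Hxy [c Hc]; exists c; apply: cls_trans Hxy Hc. Qed.

Lemma h_inM k : (n <= p)%N -> in_M p sigma g (h ^+ k).
Proof.
move=> np.
have sq : (size (Y ^+ n.-1 * (k%:Z)%:P)%R <= p)%N.
  apply: leq_trans (size_mul_leq _ _) _.
  rewrite -polyC1 size_exp_XsubC prednK //.
  apply: leq_trans _ np; rewrite -subn1 leq_subLR add1n -addn1 leq_add2l.
  exact: size_polyC_leq1.
have [e He] := toM _ sq; exists e; rewrite ActZ in He; exact: He.
Qed.

Lemma FixIff x : (n <= p)%N -> x != 0 ->
  (in_M p sigma g x /\ G_fixed p sigma x) <->
  (G_fixed p sigma x /\ exists k : nat, cls_eq p x (h ^+ k)).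
Proof.
move=> np x0; split=> [[Hm Hf]|[Hf [k Hk]]]; split => //.
  exact: core_fix.
exact: inM_cls Hk (h_inM k np).
Qed.

End Core.


Section Lift.
Variables (F : fieldType) (K : fieldExtType F) (sigma : 'AEnd(K)) (p : nat).
Hypothesis p_prime : prime p.
Variables (g g' v : K) (n : nat).
Hypotheses (g0 : g != 0) (len : length_is p sigma g n) (n2 : (2 <= n)%N) (np : (n < p)%N).
Hypotheses (g'0 : g' != 0) (v0 : v != 0) (sv : sigma v = v) (Eg' : rho sigma g' = g * v).

Lemma lift_rhoi k : (1 <= k)%N -> rhoi sigma k.+1 g' = rhoi sigma k g.
Proof.
move=> k1; rewrite rhoiS Eg' rhoiM -(prednK k1) (@rhoi_fixed _ _ sigma _ v v0 sv) mulr1 // prednK.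
Qed.

Lemma lift_len : length_is p sigma g' n.+1.
Proof.
have n1 : (1 <= n)%N by apply: leq_trans n2.
split; first by rewrite lift_rhoi //; exact: len.1.
move=> i iln Hi.
have := pth_rhoi_le sigma _ n g' iln Hi.
rewrite -(prednK n1) lift_rhoi ?prednK //; last by rewrite -ltnS prednK.
by apply: len.2; rewrite prednK.
Qed.

Lemma lift_cls : cls_eq p (rhoi sigma 2 g') (rhoi sigma 1 g).
Proof. rewrite lift_rhoi //; exact: cls_refl. Qed.

Lemma lift_fix x : x != 0 ->
  (in_M p sigma g x /\ G_fixed p sigma x) <-> (in_M p sigma g' x /\ G_fixed p sigma x).
Proof.
move=> x0; have n1 : (1 <= n)%N by apply: leq_trans n2.
rewrite (FixIff sigma p_prime g0 len n1 x (ltnW np) x0).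
have len' := lift_len.
rewrite (FixIff sigma p_prime g'0 len' (ltn0Sn n) x np x0) /=.
have E : rhoi sigma n g' = rhoi sigma n.-1 g.
  by rewrite -{1}(prednK n1) lift_rhoi // -ltnS prednK.
by rewrite -!Arhoi //= E.
Qed.

End Lift.

Lemma poly_id (p : nat) : prime p -> odd p ->
  exists w : {poly int}, ('X - 1) ^+ p.-1 = \poly_(i < p) 1 + w * (p%:Z)%:P.
Proof.
move=> pr op.
set D : {poly int} := ('X - 1) ^+ p.-1 - \poly_(i < p) 1.
have HD : forall i, (p %| D`_i)%Z.
  move=> i; rewrite (dvdz_pcharf (pchar_Fp pr)) -coef_map.
  suff -> : map_poly (intr : int -> 'F_p) D = 0 by rewrite coef0.
  have chp : [char {poly 'F_p}].-nat p.
    by rewrite (pnatE _ pr) pchar_poly pchar_Fp.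
  have E1 : ('X - 1 : {poly 'F_p}) ^+ p = 'X ^+ p - 1.
    by rewrite exprDn_pchar // -signr_odd op expr1.
  have : ('X - 1 : {poly 'F_p}) * map_poly (intr : int -> 'F_p) D = 0.
    rewrite /D rmorphB rmorphXn /= rmorphB /= map_polyX rmorph1.
    rewrite poly_def rmorph_sum /=.
    rewrite (eq_bigr (fun k : 'I_p => 'X ^+ k)); last first.
      by move=> k _; rewrite scale1r map_polyXn.
    rewrite mulrBr -exprS prednK ?prime_gt0 // E1 -subrX1 subrr //.
  move/eqP; rewrite mulf_eq0 => /orP[|/eqP //].
  by rewrite -polyC1 polyXsubC_eq0.
exists (\poly_(i < size D) (D`_i %/ p)%Z).
have Hw : forall i, (\poly_(i < size D) (D`_i %/ p)%Z)`_i * p%:Z = D`_i.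
  move=> i; rewrite coef_poly; case: ltnP => iD; first by rewrite divzK.
  by rewrite mul0r nth_default.
by apply/polyP => i; rewrite coefD coefMC Hw /D coefB [RHS]addrC subrK.
Qed.

Section Final.
Variables (F : fieldType) (K : fieldExtType F) (p : nat) (xi a : F) (alpha : K)
  (sigma : 'AEnd(K)).
Hypotheses (pr : prime p) (op : odd p) (xiP : p.-primitive_root xi)
  (Ea : alpha ^+ p = a%:A) (Hgen : <<1%VS; alpha>>%VS = fullv)
  (Hdim : \dim {:K} = p) (Hs : sigma alpha = xi%:A * alpha).

Let z : K := xi%:A.
Let p_gt0 : (0 < p)%N := prime_gt0 pr.

Lemma zP : p.-primitive_root z.
Proof. by rewrite /z -[xi%:A]/(in_alg K xi) fmorph_primitive_root. Qed.

Lemma zp : z ^+ p = 1.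
Proof. exact: prim_expr_order zP. Qed.

Lemma z_ne0 : z != 0.
Proof.
apply/eqP => E; have := zp; rewrite E expr0n gtn_eqF // => /eqP.
by rewrite eq_sym oner_eq0.
Qed.

Lemma pK : p%:R != 0 :> K.
Proof.
have := prim_root_pcharF zP (dvdnn p); rewrite inE pr /=.
by move=> ->.
Qed.

Lemma alpha_ne0 : alpha != 0.
Proof.
apply/eqP=> a0; move: Hdim; rewrite -Hgen a0 Fadjoin0 dimv1 => p1.
by move: pr; rewrite -p1.
Qed.

Lemma iter_alpha k : iter k sigma alpha = z ^+ k * alpha.
Proof.
elim: k => [|k IH] /=; first by rewrite mul1r.
by rewrite IH sM sX sA Hs mulrA -exprSr.
Qed.

Lemma fE k (x : K) : (iter k (comp_ahom sigma) \1%AF) x = iter k sigma x.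
Proof.
by elim: k => [|k IH] /=; [rewrite id_lfunE | rewrite comp_lfunE IH].
Qed.

Lemma sp (x : K) : iter p sigma x = x.
Proof.
set f := iter p (comp_ahom sigma) \1%AF.
have sub : (<<1; alpha>>%AS <= fixedSpace f)%VS.
  apply/FadjoinP; split; first exact: sub1v.
  by apply/fixedSpaceP; rewrite fE iter_alpha zp mul1r.
have Hx : x \in <<1; alpha>>%VS by rewrite Hgen memvf.
by rewrite -fE; apply: (fixedSpacesP sub).
Qed.

Local Notation N := (normK p sigma).

Lemma NM (x y : K) : N (x * y) = N x * N y.
Proof. by rewrite /normK -big_split; apply: eq_bigr => i _; rewrite iM. Qed.

Lemma NV (x : K) : N (x^-1) = (N x)^-1.
Proof. by rewrite /normK -prodfV; apply: eq_bigr => i _; rewrite iV. Qed.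

Lemma NX (x : K) k : N (x ^+ k) = (N x) ^+ k.
Proof. by rewrite /normK -prodrXl; apply: eq_bigr => i _; rewrite iX. Qed.

Lemma Nfix (d : K) : sigma d = d -> N d = d ^+ p.
Proof.
move=> sd; rewrite /normK (eq_bigr (fun _ => d)) ?prodr_const ?card_ord //.
by move=> i _; elim: (nat_of_ord i) => //= k ->.
Qed.

Lemma N_neq0 (x : K) : x != 0 -> N x != 0.
Proof. by move=> x0; apply/prodf_neq0 => i _; rewrite i_eq0. Qed.

Lemma Ns (x : K) : sigma (N x) = N x.
Proof.
rewrite /normK rmorph_prod.
have [p' Ep] : exists p', p = p'.+1 by exists p.-1; rewrite prednK.
move: (sp x); rewrite Ep => spx.
rewrite big_ord_recr big_ord_recl /=.
have -> : sigma (iter p' sigma x) = x by exact: spx.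
by rewrite mulrC; congr (_ * _); apply: eq_bigr.
Qed.

Lemma Nalpha : N alpha = a%:A.
Proof.
rewrite /normK (eq_bigr (fun i : 'I_p => z ^+ i * alpha)); last first.
  by move=> i _; rewrite iter_alpha.
rewrite big_split /= prodr_const card_ord Ea prodrXr.
have -> : (\sum_(i < p) i = 'C(p, 2))%N by rewrite -bin2_sum big_mkord.
have /eqP -> : z ^+ 'C(p, 2) == 1.
  rewrite -(prim_order_dvd zP) prime_dvd_bin //.
  by rewrite odd_prime_gt2.
by rewrite mul1r.
Qed.

Lemma geom0 i : (0 < i < p)%N -> \sum_(j < p) (z ^+ i) ^+ j = 0.
Proof.
move=> /andP[i0 ip]; set w := z ^+ i.
have w1 : w != 1 by rewrite /w -(prim_order_dvd zP) (gtnNdvd i0 ip).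
have : (w - 1) * \sum_(j < p) w ^+ j = 0.
  by rewrite -subrX1 /w -exprM mulnC exprM zp expr1n subrr.
by move/eqP; rewrite mulf_eq0 subr_eq0 (negbTE w1) /= => /eqP.
Qed.

Lemma H90 (x : K) : N x = 1 -> exists y, y != 0 /\ x * sigma y = y.
Proof.
move=> Nx.
pose c := fun i : nat => \prod_(k < i) iter k sigma x.
have cS : forall i, x * sigma (c i) = c i.+1.
  move=> i; rewrite /c big_ord_recl /= rmorph_prod; congr (_ * _).
have c0 : c 0%N = 1 by rewrite /c big_ord0.
have cp : c p = 1 by exact: Nx.
pose Y := fun th : K => \sum_(i < p) c i * iter i sigma th.
have [p' Ep] : exists p', p = p'.+1 by exists p.-1; rewrite prednK.
have HY : forall th, x * sigma (Y th) = Y th.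
  move=> th; have spth := sp th.
  rewrite /Y rmorph_sum mulr_sumr.
  rewrite Ep in cp spth *.
  rewrite big_ord_recr big_ord_recl /= addrC; congr (_ + _).
    by rewrite sM mulrA cS cp mul1r c0 mul1r; exact: spth.
  by apply: eq_bigr => i _; rewrite sM mulrA cS.
have Yj : forall j, Y (alpha ^+ j) = (\sum_(i < p) c i * (z ^+ i) ^+ j) * alpha ^+ j.
  move=> j; rewrite /Y mulr_suml; apply: eq_bigr => i _.
  by rewrite iX iter_alpha exprMn mulrA.
have [j Hj] : exists j : 'I_p, \sum_(i < p) c i * (z ^+ i) ^+ j != 0.
  case: (pickP (fun j : 'I_p => \sum_(i < p) c i * (z ^+ i) ^+ j != 0)) => [j Hj | H0].
    by exists j.
  have S0 : \sum_(j < p) \sum_(i < p) c i * (z ^+ i) ^+ j = 0.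
    by apply: big1 => j _; apply/eqP; move/negbFE: (H0 j).
  rewrite exchange_big /= in S0.
  have S1 : \sum_(i < p) \sum_(j < p) c i * (z ^+ i) ^+ j = p%:R.
    rewrite (eq_bigr (fun i : 'I_p => c i * \sum_(j < p) (z ^+ i) ^+ j)); last first.
      by move=> i _; rewrite mulr_sumr.
    move: (geom0); rewrite Ep => g0'.
    rewrite big_ord_recl [X in _ + X]big1 /=.
      by rewrite addr0 c0 mul1r expr0 (eq_bigr (fun _ => 1)) ?sumr_const ?card_ord // => k _; rewrite expr1n.
    by move=> i _; rewrite g0' ?mulr0 // /bump /= add1n ltnS ltn_ord.
  by move: pK; rewrite -S1 S0 eqxx.
exists (Y (alpha ^+ j)); split; last exact: HY.
by rewrite Yj mulf_neq0 // expf_neq0 // alpha_ne0.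
Qed.

Lemma rhoi_pm1 (b : K) : b != 0 -> exists W, W != 0 /\ rhoi sigma p.-1 b = N b * W ^+ p.
Proof.
move=> b0; have [w Ew] := poly_id p pr op.
exists (Act sigma w b); split; first exact: Act_neq0.
rewrite Arhoi // Ew ActD // ActZ; congr (_ * _).
rewrite -(ActNE sigma p) ?size_poly // /ActN; apply: eq_bigr => i _.
by rewrite coef_poly ltn_ord expr1z.
Qed.

Lemma Kummer (b : K) : b != 0 -> pth_power p (N b) ->
  exists k : nat, exists d : K, [/\ d != 0, d ^+ p = N (b / alpha ^+ k) & sigma d = d].
Proof.
move=> b0 [t Et].
have t0 : t != 0.
  by apply/eqP => t0; move: (N_neq0 _ b0); rewrite Et t0 expr0n gtn_eqF // eqxx.
have H1 : (sigma t / t) ^+ p = 1.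
  by rewrite expr_div_n -sX -Et Ns mulfV // N_neq0.
have [i Ei] := prim_rootP zP H1.
have st : sigma t = z ^+ i * t by rewrite -Ei mulfVK.
exists i, (t / alpha ^+ i); split.
- by rewrite mulf_neq0 ?invr_eq0 ?expf_neq0 ?alpha_ne0.
- rewrite NM NV NX Nalpha expr_div_n -Et; congr (_ / _).
  by rewrite -exprM mulnC exprM Ea.
- rewrite sM sV sX Hs st exprMn invfM mulrACA mulfV ?mul1r //.
  by rewrite expf_neq0 // z_ne0.
Qed.

Lemma main (g : K) (n : nat) :
    g != 0 ->
    length_is p sigma g n ->
    (2 <= n < p)%N ->
    e_index_is p sigma xi g 0 ->
  exists g' : K,
    [/\ g' != 0,
        length_is p sigma g' n.+1,
        cls_eq p (rhoi sigma 2 g') (rhoi sigma 1 g),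
        (forall x : K, x != 0 ->
           (in_M p sigma g x /\ G_fixed p sigma x) <->
           (in_M p sigma g' x /\ G_fixed p sigma x)) &
        ((n < p.-1)%N -> in_Ji p sigma p.-1 g' /\ e_index_is p sigma xi g' 0)].
Proof.
move=> g0 len /andP[n2 np] [d [Ed [d0 sd]]].
rewrite expr0 scale1r mul1r in sd.
pose x := g / d.
have Nx : N x = 1 by rewrite /x NM NV (Nfix sd) Ed mulfV // N_neq0.
have [y [y0 Hy]] := H90 Nx.
pose b := y^-1.
have b0 : b != 0 by rewrite invr_eq0.
have rb : rho sigma b = g * d^-1.
  rewrite /rho /b sV invrK -{2}Hy mulrCA mulVf ?mulr1 //.
  by rewrite s_eq0.
have dv0 : d^-1 != 0 by rewrite invr_eq0.
have sdv : sigma d^-1 = d^-1 by rewrite sV sd.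
have p3 : (2 < p)%N by rewrite odd_prime_gt2.
have [k dk] : exists k : nat, ((n < p.-1)%N -> exists d',
    [/\ d' != 0, d' ^+ p = N (b / alpha ^+ k) & sigma d' = d']).
  case: (ltnP n p.-1) => hn; last first.
    by exists 0%N.
  have [W [W0 EW]] := rhoi_pm1 _ b0.
  have Pr : pth_power p (rhoi sigma p.-1 b).
    have E : p.-1 = (p.-2).+1 by lia.
    rewrite E (lift_rhoi sigma g b dv0 sdv rb); last by lia.
    apply: (pth_rhoi_le sigma n); first by lia.
    exact: len.1.
  rewrite EW mulrC in Pr.
  have PNb : pth_power p (N b).
    apply: (pth_div _ _ _ Pr); first by rewrite expf_neq0.
    by exists W.
  have [k [d' [H1 H2 H3]]] := Kummer b0 PNb.
  by exists k => _; exists d'.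
pose g' := b / alpha ^+ k.
pose v := d^-1 * (z ^+ k)^-1.
have v0 : v != 0 by rewrite /v mulf_neq0 // invr_eq0 expf_neq0 // z_ne0.
have sv : sigma v = v by rewrite /v sM sdv sV sX sA.
have Eg' : rho sigma g' = g * v.
  rewrite /g' rhoM rb /v -mulrA; congr (_ * (_ * _)).
  rewrite /rho sV sX Hs exprMn invrK invfM -mulrA mulVf ?mulr1 //.
  by rewrite expf_neq0 // alpha_ne0.
have g'0 : g' != 0 by rewrite /g' mulf_neq0 // invr_eq0 expf_neq0 // alpha_ne0.
exists g'; split => //.
- by apply: (@lift_len _ _ sigma p g g' v n).
- by apply: (@lift_cls _ _ sigma p g g' v).
- by move=> x' x'0; apply: (@lift_fix _ _ sigma p pr g g' v n).
move=> hn; split.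
  have E : p.-1 = (p.-2).+1 by lia.
  rewrite /in_Ji E (lift_rhoi sigma g g' v0 sv Eg'); last by lia.
  apply: (pth_rhoi_le sigma n); first by lia.
  exact: len.1.
have [d' [H1 H2 H3]] := dk hn.
by exists d'; rewrite expr0 scale1r mul1r.
Qed.

End Final.

Unset Implicit Arguments.

Theorem lemma6 (F : fieldType) (K : fieldExtType F) (p : nat)
    (xi : F) (a : F) (alpha : K) (sigma : 'AEnd(K)) :
    prime p -> odd p ->
    p.-primitive_root xi ->
    alpha ^+ p = a%:A ->
    <<1%VS; alpha>>%VS = fullv ->
    \dim {:K} = p ->
    sigma alpha = xi%:A * alpha ->
  forall (g : K) (n : nat),
    g != 0 ->
    length_is p sigma g n ->
    (2 <= n < p)%N ->
    e_index_is p sigma xi g 0 ->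
  exists g' : K,
    [/\ g' != 0,
        length_is p sigma g' n.+1,
        cls_eq p (rhoi sigma 2 g') (rhoi sigma 1 g),
        (forall x : K, x != 0 ->
           (in_M p sigma g x /\ G_fixed p sigma x) <->
           (in_M p sigma g' x /\ G_fixed p sigma x)) &
        ((n < p.-1)%N -> in_Ji p sigma p.-1 g' /\ e_index_is p sigma xi g' 0)].
Proof.
move=> pr op xiP Ea Hgen Hdim Hs g n.
exact: (@main F K p xi a alpha sigma pr op xiP Ea Hgen Hdim Hs g n).
Qed.
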